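(* Let $A\in M_n(\mathbb{C})$ be skew-symmetric ($A^\top=-A$). There is an $n\times n$ matrix $C=C(A)$, each of whose entries is a polynomial with real coefficients in the entries of $A$, such that the first column of $CAC^\top$ has all entries equal to zero except possibly the entry in the second row, and such that $\det(C(A))$, viewed as a polynomial in the entries of $A$, is not the zero polynomial. *)

(* Defs.v *)
From mathcomp Require Import all_boot all_algebra.
From mathcomp Require Import Rstruct.
From Stdlib Require Import Reals.
From mathcomp.real_closed Require Import complex.
From mathcomp Require Import mpoly.

Set Implicit Arguments.
Unset Strict Implicit.
Unset Printing Implicit Defensive.

Import GRing.Theory.
Local Open Scope ring_scope.

Definition Cplx : fieldType := complex R.

(* Real polynomials in the n^2 entries of an n x n matrix: the entry (i,j)
   is the variable 'X_(mxvec_index i j) of {mpoly R[n * n]}. *)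
Definition polymx (n : nat) := 'M[{mpoly R[n * n]}]_n.

Definition mx_eval (n : nat) (S : comRingType) (f : R -> S)
    (C : polymx n) (A : 'M[S]_n) : 'M[S]_n :=
  map_mx (mmap f (fun v : 'I_(n * n) => mxvec A 0 v)) C.

Definition evalC (n : nat) (C : polymx n) (A : 'M[Cplx]_n) : 'M[Cplx]_n :=
  mx_eval (fun x : R => (x%:C)%C) C A.

Definition generic_skew (n : nat) : 'M[{mpoly R[n * n]}]_n :=
  \matrix_(i < n, j < n)
    if ltn i j then 'X_(mxvec_index i j)
    else if ltn j i then - 'X_(mxvec_index j i)
    else 0.

(* det(C(A)) viewed as a polynomial in the (independent) entries of the
   skew-symmetric matrix A. *)
Definition det_poly_skew (n : nat) (C : polymx n) : {mpoly R[n * n]} :=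
  \det (mx_eval (fun x : R => x%:MP) C (generic_skew n)).

(* Main.v *)
Require Import Defs.
From mathcomp Require Import all_boot all_algebra.
From mathcomp Require Import Rstruct.
From Stdlib Require Import Reals.
From mathcomp.real_closed Require Import complex.
From mathcomp Require Import mpoly.
Import GRing.Theory.
Local Open Scope ring_scope.

Section H.
Context (k : nat) (S : comRingType) (f : R -> S) (h : 'I_k -> S).
Lemma mm0 : mmap f h 0 = 0.
Proof. by rewrite /mmap msupp0 big_nil. Qed.
Lemma mm1 : mmap f h 1 = f 1.
Proof. by rewrite /mmap -mpolyC1 msuppC oner_eq0 big_seq1 mmap11 mulr1 mcoeffC eqxx mulr1. Qed.
Lemma mmX i : mmap f h 'X_i = f 1 * h i.
Proof. by rewrite /mmap msuppX big_seq1 mcoeffX eqxx mmap1U. Qed.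
End H.

Lemma fC1 : ((1:R)%:C)%C = 1 :> Cplx. Proof. by []. Qed.
Lemma fP1 n : (1:R)%:MP = 1 :> {mpoly R[n]}. Proof. exact: mpolyC1. Qed.

Lemma skew_diag n (A : 'M[Cplx]_n) i : A^T = - A -> A i i = 0.
Proof.
move=> /matrixP /(_ i i); rewrite !mxE => /eqP.
rewrite -addr_eq0 -mulr2n => /eqP/eqP.
rewrite (@Num.Theory.mulrn_eq0 (complex R)) /= => /eqP //.
Qed.

Lemma skew_off n (A : 'M[Cplx]_n) i j : A^T = - A -> A i j = - A j i.
Proof. by move=> /matrixP /(_ j i); rewrite !mxE. Qed.

Lemma X_neq0 n (i : 'I_n) : ('X_i : {mpoly R[n]}) != 0.
Proof.
apply/negP => /eqP H; have := mcoeffXU R i i; rewrite H mcoeff0 eqxx => /eqP.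
by rewrite eq_sym oner_eq0.
Qed.

Lemma evalE n (S : comRingType) (f : R -> S) (C : polymx n) (A : 'M[S]_n) i j :
  mx_eval f C A i j = mmap f (fun v => mxvec A 0 v) (C i j).
Proof. by rewrite /mx_eval /map_mx ?mxE. Qed.

Definition Cm (m : nat) : polymx m.+2 :=
  let o0 := (ord0 : 'I_m.+2) in let o1 := (inord 1 : 'I_m.+2) in
  \matrix_(i, j) if i == o0 then (if j == o0 then 1 else 0)
                 else if i == o1 then (if j == o1 then 1 else 0)
                 else if j == o1 then 'X_(mxvec_index i o0)
                 else if j == i then 'X_(mxvec_index o0 o1) else 0.

Theorem lemmaI4 (n : nat) :
  exists C : polymx n,
    (forall A : 'M[Cplx]_n, A^T = - A ->
       forall i j : 'I_n, nat_of_ord j = 0%N -> nat_of_ord i <> 1%N ->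
         (evalC C A *m A *m (evalC C A)^T) i j = 0)
    /\ det_poly_skew C != 0.
Proof.
case: n => [|[|m]].
- exists 0; split; first by move=> A _ [] [].
  by rewrite /det_poly_skew det_mx00 oner_eq0.
- exists (\matrix_(i, j) 1); split.
    move=> A sA i j _ _; rewrite !ord1 !mxE big_ord1 !mxE big_ord1.
    by rewrite (skew_diag _ _ ord0 sA) mulr0 mul0r.
  rewrite /det_poly_skew det_mx11 /mx_eval /map_mx ?mxE mm1 fP1 oner_eq0 //.
set o0 := (ord0 : 'I_m.+2); set o1 := (inord 1 : 'I_m.+2).
have vo1 : nat_of_ord o1 = 1%N by rewrite inordK.
have o10 : o1 != o0 by apply/eqP => e; move: (congr1 (@nat_of_ord _) e); rewrite vo1.
exists (Cm m); split.
  move=> A sA i j j0 i1.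
  have -> : j = o0 by apply/val_inj.
  have io1 : i != o1 by apply/eqP => e; move: (congr1 (@nat_of_ord _) e); rewrite vo1.
  rewrite mxE (bigD1 o0) //= big1 ?addr0; last first.
    move=> k kn0; rewrite !mxE /evalC /mx_eval /map_mx ?mxE eqxx (negbTE kn0) mm0 mulr0 //.
  rewrite !mxE /evalC /mx_eval /map_mx ?mxE eqxx mm1 fC1 mulr1.
  case: (eqVneq i o0) => [->|in0].
    rewrite (bigD1 o0) //= big1 ?addr0; last first.
      by move=> k kn0; rewrite /mx_eval /map_mx ?mxE eqxx (negbTE kn0) mm0 mul0r.
    by rewrite /mx_eval /map_mx ?mxE eqxx mm1 fC1 mul1r (skew_diag _ _ o0 sA).
  rewrite (bigD1 o1) //= (bigD1 i) //= big1 ?addr0; last first.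
    move=> k /andP[kn1 kni]; rewrite /mx_eval /map_mx ?mxE (negbTE in0) (negbTE io1).
    by rewrite (negbTE kn1) (negbTE kni) mm0 mul0r.
  rewrite /mx_eval /map_mx ?mxE (negbTE in0) (negbTE io1) eqxx; rewrite ifT //.
  rewrite !mmX fC1 !mul1r !mxvecE (skew_off _ _ o0 o1 sA).
  by rewrite mulNr mulrC addrN.
rewrite /det_poly_skew det_trig; last first.
  apply/is_trig_mxP => i j lij; rewrite /mx_eval /map_mx ?mxE.
  have ji : j != i by apply/eqP => e; move: lij; rewrite e ltnn.
  case: (eqVneq i o0) => [ei|in0].
    have e1 : (i == ord0) = true by rewrite ei.
    have e2 : (j == ord0) = false by apply/negbTE; move: ji; rewrite ei.
    by rewrite ?e1 ?e2 mm0.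
  have e0 : (i == ord0) = false by apply/negbTE.
  case: (eqVneq i o1) => [ei|io1].
    have e1 : (i == inord 1) = true by apply/eqP.
    have e2 : (j == inord 1) = false by apply/negbTE; move: ji; rewrite ei.
    by rewrite ?e0 ?e1 ?e2 mm0.
  have e1 : (i == inord 1) = false by apply/negbTE.
  rewrite ?e0 ?e1.
  case: (eqVneq j o1) => [ej|jo1].
    exfalso; move: lij; rewrite ej vo1.
    have : (nat_of_ord i != 0%N) /\ (nat_of_ord i != 1%N).
      split; apply/eqP => e.
        by move/eqP: in0; apply; apply/val_inj.
      by move/eqP: io1; apply; apply/val_inj; rewrite /= vo1.
    by move=> [h0 _]; rewrite ltnS leqn0 (negbTE h0).
  case: (eqVneq j i) => [ej|_]; last by rewrite mm0.
  by move: lij; rewrite ej ltnn.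
rewrite prodf_seq_neq0; apply/allP => i _ /=.
rewrite /mx_eval /map_mx ?mxE.
case: (eqVneq i o0) => _; first by rewrite mm1 fP1 oner_eq0.
case: (eqVneq i o1) => [_|io1]; first by rewrite mm1 fP1 oner_eq0.
rewrite eqxx mmX fP1 mul1r mxvecE mxE.
have -> : ltn (@ord0 m.+1) (@inord m.+1 1).
  by rewrite /ltn vo1.
exact: X_neq0.
Qed.
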